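(* For all $v_1,v_2\in\mathcal S$, $\langle Yv_1,v_2\rangle=\langle v_1,Uv_2\rangle$ and $\langle Xv_1,v_2\rangle=\langle v_1,Xv_2\rangle$.
   Context: Chord diagrams and $w_{\mathfrak{sl}_2}(D)=\sum_\varphi x_{\varphi(p_1)}\cdots x_{\varphi(p_{2n})}\in\mathbb C[c]$ ($x_1,x_2,x_3$ the basis $\tfrac12\begin{pmatrix}0&1\\1&0\end{pmatrix},\tfrac12\begin{pmatrix}0&-i\\ i&0\end{pmatrix},\tfrac12\begin{pmatrix}1&0\\0&-1\end{pmatrix}$ of $\mathfrak{sl}_2$, $c=\sum x_i^2$, endpoints read in order from a cut point, $\varphi$ over maps chords$\to\{1,2,3\}$). A share: two oriented intervals (strand 1, strand 2) with finitely many chords, up to orientation-preserving diffeomorphisms of each strand. Join $(I,H)$: chord diagram whose circle reads strand 1 of $I$, strand 1 of $H$, strand 2 of $I$, strand 2 of $H$. $\mathcal S$: quotient of the $\mathbb C$-span of shares by $I\sim I'$ iff $w_{\mathfrak{sl}_2}((I,H))=w_{\mathfrak{sl}_2}((I',H))$ for all shares $H$; $\langle I,H\rangle=w_{\mathfrak{sl}_2}((I,H))$ is the induced bilinear form. Linear operators on $\mathcal S$ induced from shares: $U$ adds an arch on strand 1 whose endpoints precede and follow all other endpoints on strand 1; $X$ adds a bridge from a point after all endpoints on strand 1 to a point after all endpoints on strand 2; $Y$ adds a bridge from a point after all endpoints on strand 1 to a point before all endpoints on strand 2. *)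

(* Defs.v *)
From HB Require Import structures.
From mathcomp Require Import all_boot all_order all_algebra.
Set Implicit Arguments. Unset Strict Implicit. Unset Printing Implicit Defensive.
Import Order.TTheory GRing.Theory Num.Theory.
Local Open Scope ring_scope.

(* A chord diagram, read from a cut point, is a word of chord labels:
   each chord label occurs at exactly its two endpoints. *)
Definition word := seq nat.

(* A share: (strand 1, strand 2), each the sequence of chord labels of its
   endpoints in the order given by the orientation. *)
Definition share := (word * word)%type.

Definition valid_share (I : share) : bool :=
  all (fun x => count_mem x (I.1 ++ I.2) == 2%N) (I.1 ++ I.2).

(* join (I,H): strand 1 of I, strand 1 of H, strand 2 of I, strand 2 of H;
   chord labels of I and H are made disjoint (even / odd). *)
Definition tagI (s : word) : word := [seq k.*2 | k <- s].
Definition tagH (s : word) : word := [seq k.*2.+1 | k <- s].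
Definition join (I H : share) : word :=
  tagI I.1 ++ tagH H.1 ++ tagI I.2 ++ tagH H.2.

Definition fresh (I : share) : nat := (foldr maxn 0%N (I.1 ++ I.2)).+1.

(* U: arch on strand 1 enclosing all endpoints on strand 1 *)
Definition Ush (I : share) : share :=
  let f := fresh I in (f :: I.1 ++ [:: f], I.2).
(* X: bridge from end of strand 1 to end of strand 2 *)
Definition Xsh (I : share) : share :=
  let f := fresh I in (I.1 ++ [:: f], I.2 ++ [:: f]).
(* Y: bridge from end of strand 1 to beginning of strand 2 *)
Definition Ysh (I : share) : share :=
  let f := fresh I in (I.1 ++ [:: f], f :: I.2).

(* Letters 0,1,2 : 'I_3 stand for x_1, x_2, x_3. *)

Section Usl2.
Variable C : numClosedFieldType.

(* formal (finite) linear combinations of words in x_1,x_2,x_3 *)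
Definition fsum := seq (C * seq 'I_3).

Definition coef (f : fsum) (w : seq 'I_3) : C :=
  \sum_(p <- f | p.2 == w) p.1.

Definition fscale (a : C) (f : fsum) : fsum := [seq (a * p.1, p.2) | p <- f].

(* [x_i, x_j] for the basis x_1 = s1/2, x_2 = s2/2, x_3 = s3/2:
   [x_1,x_2] = i x_3, [x_2,x_3] = i x_1, [x_3,x_1] = i x_2. *)
Definition bracket (i j : 'I_3) : seq (C * 'I_3) :=
  match val i, val j with
  | 0, 1 => [:: ('i, inord 2)]
  | 1, 0 => [:: (- 'i, inord 2)]
  | 1, 2 => [:: ('i, inord 0)]
  | 2, 1 => [:: (- 'i, inord 0)]
  | 2, 0 => [:: ('i, inord 1)]
  | 0, 2 => [:: (- 'i, inord 1)]
  | _, _ => [::]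
  end%N.

Definition rel_elem (t : C * seq 'I_3 * 'I_3 * 'I_3 * seq 'I_3) : fsum :=
  let: (c, u, i, j, v) := t in
  (c, u ++ [:: i; j] ++ v) :: (- c, u ++ [:: j; i] ++ v)
  :: [seq (- c * q.1, u ++ [:: q.2] ++ v) | q <- bracket i j].

(* membership in the two-sided ideal generated by the defining relations *)
Definition inJ (f : fsum) : Prop :=
  exists l : seq (C * seq 'I_3 * 'I_3 * 'I_3 * seq 'I_3),
    forall w, coef f w = coef (flatten (map rel_elem l)) w.

Definition ueq (f g : fsum) : Prop := inJ (f ++ fscale (-1) g).

Fixpoint colourings (m : nat) : seq (seq 'I_3) :=
  if m is m'.+1 then [seq c :: t | c <- enum 'I_3, t <- colourings m']
  else [:: [::]].

Definition wsl2 (D : word) : fsum :=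
  let ids := undup D in
  [seq (1, [seq nth ord0 phi (index p ids) | p <- D])
  | phi <- colourings (size ids)].

Definition span_el := seq (C * share).

Definition pairing (v1 v2 : span_el) : fsum :=
  flatten [seq fscale (a.1 * b.1) (wsl2 (join a.2 b.2)) | a <- v1, b <- v2].

Definition opU (v : span_el) : span_el := [seq (a.1, Ush a.2) | a <- v].
Definition opX (v : span_el) : span_el := [seq (a.1, Xsh a.2) | a <- v].
Definition opY (v : span_el) : span_el := [seq (a.1, Ysh a.2) | a <- v].

Definition valid_span (v : span_el) : bool := all valid_share (map snd v).

End Usl2.

(* Main.v *)
Require Import Defs.
From HB Require Import structures.
From mathcomp Require Import all_boot all_order all_algebra.
From Stdlib Require Import FunctionalExtensionality.
From mathcomp Require Import ring.
Set Implicit Arguments. Unset Strict Implicit. Unset Printing Implicit Defensive.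
Import Order.TTheory GRing.Theory Num.Theory.
Local Open Scope ring_scope.

Section Work.
Variable C : numClosedFieldType.
Implicit Types f g : fsum C.

Definition ceq f g := forall w, coef f w = coef g w.

Lemma coefE f w : coef f w = \sum_(p <- f) (if p.2 == w then p.1 else 0).
Proof. by rewrite /coef big_mkcond. Qed.

Lemma coef_nil w : coef ([::] : fsum C) w = 0.
Proof. by rewrite /coef big_nil. Qed.

Lemma coef_cons p f w : coef (p :: f) w = (if p.2 == w then p.1 else 0) + coef f w.
Proof. by rewrite !coefE big_cons. Qed.

Lemma coef_cat f g w : coef (f ++ g) w = coef f w + coef g w.
Proof. by rewrite !coefE big_cat. Qed.

Lemma coef_flatten (T : Type) (s : seq T) (F : T -> fsum C) w :
  coef (flatten (map F s)) w = \sum_(x <- s) coef (F x) w.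
Proof.
elim: s => [|x s IH]; first by rewrite big_nil coef_nil.
by rewrite /= coef_cat IH big_cons.
Qed.

Lemma coef_fscale a f w : coef (fscale a f) w = a * coef f w.
Proof.
elim: f => [|p f IH]; first by rewrite /= !coef_nil mulr0.
by rewrite /= !coef_cons IH /= mulrDr; case: eqP => _; rewrite ?mulr0.
Qed.

Lemma coef_map1 (T : Type) (s : seq T) (G : T -> seq 'I_3) w :
  coef [seq ((1 : C), G x) | x <- s] w = \sum_(x <- s) ((G x == w)%:R : C).
Proof.
elim: s => [|x s IH]; first by rewrite big_nil coef_nil.
by rewrite /= coef_cons IH big_cons /=; case: eqP.
Qed.

Lemma J_zero f : (forall w, coef f w = 0) -> inJ f.
Proof. move=> H; exists [::] => w; by rewrite H /= coef_nil. Qed.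

Lemma J_cat f g : inJ f -> inJ g -> inJ (f ++ g).
Proof.
move=> [l1 H1] [l2 H2]; exists (l1 ++ l2) => w.
by rewrite map_cat flatten_cat !coef_cat H1 H2.
Qed.

Definition sct (a : C) (t : C * seq 'I_3 * 'I_3 * 'I_3 * seq 'I_3) :=
  let: (c, u, i, j, v) := t in (a * c, u, i, j, v).

Lemma coef_rel_sct a t w : coef (rel_elem (sct a t)) w = a * coef (rel_elem t) w.
Proof.
case: t => [[[[c u] i] j] v] /=.
rewrite !coef_cons /=.
have -> : forall s, coef [seq (- (a * c) * q.1, u ++ [:: q.2] ++ v) | q <- s] w
   = a * coef [seq (- c * q.1, u ++ [:: q.2] ++ v) | q <- s] w.
  elim=> [|q s IH]; first by rewrite /= !coef_nil mulr0.
  rewrite /= !coef_cons IH /= mulrDr; case: eqP => _; last by rewrite mulr0.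
  by rewrite mulrA mulrN mulNr.
rewrite !mulrDr; congr (_ + (_ + _)); case: eqP => _; rewrite ?mulr0 //.
by rewrite mulrN.
Qed.

Lemma J_scale a f : inJ f -> inJ (fscale a f).
Proof.
move=> [l H]; exists (map (sct a) l) => w.
rewrite coef_fscale H -map_comp !coef_flatten mulr_sumr.
by apply: eq_bigr => t _; rewrite coef_rel_sct.
Qed.

Lemma J_ceq f g : ceq f g -> inJ f -> inJ g.
Proof. move=> E [l H]; exists l => w; by rewrite -E H. Qed.

Lemma J_rel (t : C * seq 'I_3 * 'I_3 * 'I_3 * seq 'I_3) : inJ (rel_elem t).
Proof. exists [:: t] => w; by rewrite /= cats0. Qed.

Notation U := (@ueq C).

Lemma coef_dif f g w : coef (f ++ fscale (-1) g) w = coef f w - coef g w.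
Proof. by rewrite coef_cat coef_fscale mulN1r. Qed.

Lemma J_lin f g (h : fsum C) a : inJ f -> inJ g -> (forall w, coef h w = coef f w + a * coef g w) -> inJ h.
Proof.
move=> Hf Hg E; apply: (J_ceq _ (J_cat Hf (J_scale a Hg))) => w.
by rewrite E coef_cat coef_fscale.
Qed.

Lemma U_ceq f g : ceq f g -> U f g.
Proof. move=> E; apply: J_zero => w; by rewrite coef_dif E subrr. Qed.

Lemma U_trans f g (h : fsum C) : U f g -> U g h -> U f h.
Proof.
rewrite /ueq => H1 H2; apply: (J_lin (a := 1) H1 H2) => w.
by rewrite !coef_dif mul1r addrA subrK.
Qed.

Lemma U_sym f g : U f g -> U g f.
Proof.
rewrite /ueq => H1; apply: (J_lin (a := -1) (J_zero (f := [::]) (fun w => coef_nil w)) H1) => w.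
by rewrite !coef_dif coef_nil add0r mulN1r opprB.
Qed.

Lemma U_cat f1 g1 f2 g2 : U f1 g1 -> U f2 g2 -> U (f1 ++ f2) (g1 ++ g2).
Proof.
rewrite /ueq => H1 H2; apply: (J_lin (a := 1) H1 H2) => w.
rewrite !coef_dif !coef_cat mul1r; ring.
Qed.

Lemma U_scale a f g : U f g -> U (fscale a f) (fscale a g).
Proof.
rewrite /ueq => H1; apply: (J_lin (a := a) (J_zero (f := [::]) (fun w => coef_nil w)) H1) => w.
by rewrite !coef_dif !coef_fscale coef_nil add0r mulrBr.
Qed.

Lemma U_ceqL f f' g g' : ceq f f' -> ceq g g' -> U f g -> U f' g'.
Proof.
move=> E1 E2 H; apply: U_trans (U_ceq (fun w => esym (E1 w))) _.
apply: U_trans H (U_ceq E2).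
Qed.

Lemma U_cancel f g f' g' : U (f ++ g) (f' ++ g') -> U g g' -> U f f'.
Proof.
rewrite /ueq => H1 H2; apply: (J_lin (a := -1) H1 H2) => w.
rewrite !coef_dif !coef_cat; ring.
Qed.

Lemma U_half f g : U (f ++ f) (g ++ g) -> U f g.
Proof.
rewrite /ueq => H1; apply: (J_lin (a := 2^-1) (J_zero (f := [::]) (fun w => coef_nil w)) H1) => w.
rewrite !coef_dif !coef_cat coef_nil add0r.
have h2 : (2 : C) != 0 by rewrite pnatr_eq0.
by field.
Qed.

Lemma U_flatten (T : eqType) (s : seq T) (F G : T -> fsum C) :
  (forall x, x \in s -> U (F x) (G x)) -> U (flatten (map F s)) (flatten (map G s)).
Proof.
elim: s => [|x s IH] H /=; first by apply: U_ceq.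
apply: U_cat; first by apply: H; rewrite inE eqxx.
by apply: IH => y ys; apply: H; rewrite inE ys orbT.
Qed.


Definition upd (col : nat -> 'I_3) (l : nat) (A : 'I_3) : nat -> 'I_3 :=
  fun p => if p == l then A else col p.

Fixpoint sumcol (col : nat -> 'I_3) (L : seq nat) (F : (nat -> 'I_3) -> fsum C) : fsum C :=
  match L with
  | [::] => F col
  | l :: L' => flatten [seq sumcol (upd col l A) L' F | A <- enum 'I_3]
  end.

Fixpoint csum (col : nat -> 'I_3) (L : seq nat) (phi : (nat -> 'I_3) -> C) : C :=
  match L with
  | [::] => phi col
  | l :: L' => \sum_(A <- enum 'I_3) csum (upd col l A) L' phi
  end.

Lemma coef_sumcol col L F w : coef (sumcol col L F) w = csum col L (fun c => coef (F c) w).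
Proof.
elim: L col => [|l L IH] col //=.
by rewrite coef_flatten; apply: eq_bigr => A _; rewrite IH.
Qed.

Lemma csum_ext col L phi psi : (forall c, phi c = psi c) -> csum col L phi = csum col L psi.
Proof.
move=> E; elim: L col => [|l L IH] col /=; first by apply: E.
by apply: eq_bigr => A _; apply: IH.
Qed.

Lemma csum_add col L phi psi :
  csum col L (fun c => phi c + psi c) = csum col L phi + csum col L psi.
Proof.
elim: L col => [|l L IH] col //=.
by rewrite -big_split; apply: eq_bigr => A _; apply: IH.
Qed.

Lemma csum_sum (T : Type) (s : seq T) col L (phi : T -> (nat -> 'I_3) -> C) :
  csum col L (fun c => \sum_(x <- s) phi x c) = \sum_(x <- s) csum col L (phi x).
Proof.
elim: s => [|x s IH].
  rewrite big_nil; elim: L col => [|l L IHL] col /=; first by rewrite big_nil.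
  by rewrite big1 // => A _; rewrite IHL.
rewrite big_cons -IH -csum_add; apply: csum_ext => c; by rewrite big_cons.
Qed.

Lemma csum0 col L : csum col L (fun _ => 0) = 0.
Proof.
elim: L col => [|l L IH] col //=; by rewrite big1 // => A _; rewrite IH.
Qed.

Lemma upd_comm c x y A B : x != y -> upd (upd c x A) y B = upd (upd c y B) x A.
Proof.
move=> nxy; apply: functional_extensionality => p; rewrite /upd.
case Hx: (p == x); case Hy: (p == y) => //.
by move: nxy; rewrite -(eqP Hx) Hy.
Qed.

Lemma upd_same c x A B : upd (upd c x A) x B = upd c x B.
Proof.
apply: functional_extensionality => p; rewrite /upd; by case: (p == x).
Qed.

Lemma csum_front col L1 x L2 phi :
  csum col (L1 ++ x :: L2) phi = csum col (x :: L1 ++ L2) phi.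
Proof.
elim: L1 col => [|y L1 IH] col //=.
under eq_bigr => B _ do rewrite IH /=.
case: (eqVneq x y) => [<-|nxy].
  transitivity (\sum_(B <- enum 'I_3) \sum_(A <- enum 'I_3) csum (upd col x A) (L1 ++ L2) phi).
    by apply: eq_bigr => B _; apply: eq_bigr => A _; rewrite upd_same.
  by apply: eq_bigr => B _; apply: eq_bigr => A _; rewrite upd_same.
rewrite exchange_big /=; apply: eq_bigr => A _; apply: eq_bigr => B _.
by rewrite upd_comm // eq_sym.
Qed.

Lemma csum_perm L L' col phi : perm_eq L L' -> csum col L phi = csum col L' phi.
Proof.
elim: L L' col => [|x L IH] L' col.
  by move=> /perm_size /= /esym /size0nil ->.
move=> pL; have : x \in L' by rewrite -(perm_mem pL) inE eqxx.
move=> xL; case/splitPr: xL pL => L1 L2 pL.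
rewrite csum_front /=; apply: eq_bigr => A _; apply: IH.
have : perm_eq (x :: L) (x :: L1 ++ L2).
  by rewrite (perm_trans pL) // -cat1s perm_catCA.
by rewrite perm_cons.
Qed.

Lemma csum_cat col L1 L2 phi : csum col (L1 ++ L2) phi = csum col L1 (fun c => csum c L2 phi).
Proof. by elim: L1 col => [|l L1 IH] col //=; apply: eq_bigr => A _; apply: IH. Qed.

Lemma csum_pull col x L phi : x \notin L ->
  \sum_(A <- enum 'I_3) csum (upd col x A) L phi
  = csum col L (fun c => \sum_(A <- enum 'I_3) phi (upd c x A)).
Proof.
elim: L col => [|l L IH] col //= nx.
rewrite inE negb_or in nx; case/andP: nx => nxl nxL.
rewrite exchange_big /=; apply: eq_bigr => B _; rewrite -IH //.
by apply: eq_bigr => A _; rewrite upd_comm.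
Qed.

Lemma sumcol_ext col L F G :
  (forall c, (forall p, p \notin L -> c p = col p) -> F c = G c) ->
  sumcol col L F = sumcol col L G.
Proof.
elim: L col => [|l L IH] col E /=; first by apply: E.
congr flatten; apply: eq_map => A; apply: IH => c Hc; apply: E => p Hp.
rewrite inE negb_or in Hp; case/andP: Hp => npl npL.
by rewrite Hc // /upd (negbTE npl).
Qed.

Lemma sumcol_catF col L F G :
  ceq (sumcol col L (fun c => F c ++ G c)) (sumcol col L F ++ sumcol col L G).
Proof. by move=> w; rewrite coef_cat !coef_sumcol -csum_add; apply: csum_ext => c; rewrite coef_cat. Qed.

Lemma sumcol_catL col L1 L2 F : sumcol col (L1 ++ L2) F = sumcol col L1 (fun c => sumcol c L2 F).
Proof. by elim: L1 col => [|l L1 IH] col //=; congr flatten; apply: eq_map => A; apply: IH. Qed.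

Lemma U_sumcol col L F G : (forall c, ueq (F c) (G c)) -> ueq (sumcol col L F) (sumcol col L G).
Proof.
move=> E; elim: L col => [|l L IH] col /=; first by apply: E.
by apply: U_flatten => A _; apply: IH.
Qed.

Lemma sumcol_perm col L L' F : perm_eq L L' -> ceq (sumcol col L F) (sumcol col L' F).
Proof. by move=> p w; rewrite !coef_sumcol; apply: csum_perm. Qed.


Lemma wsl2_gen (L : seq nat) (D : word) col w : uniq L ->
  coef [seq ((1 : C), [seq (if p \in L then nth ord0 phi (index p L) else col p) | p <- D])
       | phi <- colourings (size L)] w
  = csum col L (fun c => ((map c D == w)%:R : C)).
Proof.
elim: L col => [|l L IH] col.
  by move=> _; rewrite /= coef_cons coef_nil addr0 /=; case: eqP.
move=> /andP [nlL uL].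
rewrite coef_map1 [size _]/= [colourings _]/= big_allpairs_dep /=; apply: eq_bigr => A _.
rewrite -IH // coef_map1; apply: eq_bigr => t _.
congr ((_ == w)%:R); apply: eq_map => p.
rewrite inE /upd; case: (eqVneq p l) => [->|npl] /=.
  by rewrite (negbTE nlL).
by [].
Qed.

Definition col0 : nat -> 'I_3 := fun _ => ord0.

Lemma wsl2_sumcol (D : word) :
  ceq (wsl2 C D) (sumcol col0 (undup D) (fun c => [:: ((1 : C), map c D)])).
Proof.
move=> w; rewrite coef_sumcol.
have -> : wsl2 C D = [seq ((1 : C), [seq (if p \in undup D then nth ord0 phi (index p (undup D)) else col0 p) | p <- D])
       | phi <- colourings (size (undup D))].
  rewrite /wsl2 /=; apply: eq_map => phi; congr (_, _); apply/eq_in_map => p pD.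
  by rewrite mem_undup pD.
rewrite wsl2_gen ?undup_uniq //; apply: csum_ext => c.
by rewrite coef_cons coef_nil addr0 /=; case: eqP.
Qed.

Lemma wsl2_relabel (s : nat -> nat) (D : word) : injective s -> wsl2 C (map s D) = wsl2 C D.
Proof.
move=> si; rewrite /wsl2 undup_map_inj // size_map; apply: eq_map => phi.
by congr (_, _); rewrite -map_comp; apply: eq_map => p /=; rewrite index_map.
Qed.


Lemma U_refl f : ueq f f.
Proof. by apply: U_ceq. Qed.

Lemma rel1 u y a v :
  ueq [:: ((1 : C), u ++ y :: a :: v)]
      (((1 : C), u ++ a :: y :: v) :: [seq (q.1, u ++ q.2 :: v) | q <- bracket C y a]).
Proof.
rewrite /ueq; apply: J_ceq (J_rel (1, u, y, a, v)) => w.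
rewrite /= !coef_cons /= mulr1; congr (_ + (_ + _)).
elim: (bracket C y a) => [|q s IH] //=.
by rewrite !coef_cons IH /=.
Qed.

Fixpoint dsub (u s v : seq 'I_3) (y : 'I_3) : fsum C :=
  match s with
  | [::] => [::]
  | a :: s' => [seq (q.1, u ++ q.2 :: s' ++ v) | q <- bracket C y a] ++ dsub (rcons u a) s' v y
  end.

Lemma expand u y s v :
  ueq [:: ((1 : C), u ++ y :: s ++ v)] (((1 : C), u ++ s ++ y :: v) :: dsub u s v y).
Proof.
elim: s u => [|a s IH] u /=; first exact: U_refl.
apply: U_trans (rel1 u y a (s ++ v)) _.
have := IH (rcons u a); rewrite cat_rcons => IH'.
apply: U_trans (U_cat (f2 := [seq (q.1, u ++ q.2 :: s ++ v) | q <- bracket C y a]) IH' (U_refl _)) _.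
apply: U_ceq => w; rewrite /= !coef_cons !coef_cat /= cat_rcons; ring.
Qed.

Definition evl (c : nat -> 'I_3) (e : (nat + 'I_3)%type) : 'I_3 :=
  match e with inl l => c l | inr x => x end.
Definition ev (c : nat -> 'I_3) (m : seq (nat + 'I_3)) := map (evl c) m.

Fixpoint derl (l : nat) (u v : seq 'I_3) (c : nat -> 'I_3) (y : 'I_3) (m : seq (nat + 'I_3)) : fsum C :=
  match m with
  | [::] => [::]
  | e :: m' => (if e == inl l then [seq (q.1, u ++ q.2 :: ev c m' ++ v) | q <- bracket C y (c l)] else [::])
               ++ derl l (rcons u (evl c e)) v c y m'
  end.

Lemma derl_cat l u v c y m1 m2 :
  derl l u v c y (m1 ++ m2) = derl l u (ev c m2 ++ v) c y m1 ++ derl l (u ++ ev c m1) v c y m2.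
Proof.
elim: m1 u => [|e m1 IH] u /=; first by rewrite cats0.
rewrite IH -catA cat_rcons /ev map_cat -catA; congr (_ ++ _).
Qed.

Lemma derl_notin l u v c y m : inl l \notin m -> derl l u v c y m = [::].
Proof.
elim: m u => [|e m IH] u //=; rewrite inE negb_or => /andP [ne nm].
by rewrite eq_sym (negbTE ne) IH.
Qed.

Lemma ev_cat c m1 m2 : ev c (m1 ++ m2) = ev c m1 ++ ev c m2.
Proof. exact: map_cat. Qed.

Lemma ev_inr c u : ev c (map inr u) = u.
Proof. by elim: u => //= x u ->. Qed.

Lemma ev_inl c h : ev c (map inl h) = map c h.
Proof. by elim: h => //= x h ->. Qed.

Lemma derl_inr l u v c y x : derl l u v c y (map inr x) = [::].
Proof. apply: derl_notin; elim: x => //= a x IH; by rewrite inE negb_or IH. Qed.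

Lemma inl_eq (p l : nat) : ((inl p : (nat + 'I_3)%type) == inl l) = (p == l).
Proof. by []. Qed.

Lemma sum_pick (LH : seq nat) p (F : nat -> C) : uniq LH -> p \in LH ->
  \sum_(l <- LH) (if p == l then F l else 0) = F p.
Proof.
move=> uL pL; rewrite (perm_big _ (perm_to_rem pL)) big_cons eqxx big1_seq; first by rewrite /= addr0.
move=> l /andP [_ lr]; case: eqP => // epl.
by move: lr; rewrite -epl mem_rem_uniqF.
Qed.

Lemma dsub_derl LH u h v c y w : uniq LH -> (forall p, p \in h -> p \in LH) ->
  coef (dsub u (map c h) v y) w = \sum_(l <- LH) coef (derl l u v c y (map inl h)) w.
Proof.
move=> uL; elim: h u => [|p h IH] u hL /=.
  by rewrite coef_nil big1.
under [RHS]eq_bigr => l _ do rewrite coef_cat inl_eq.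
rewrite big_split /= coef_cat IH; last by move=> q qh; apply: hL; rewrite inE qh orbT.
congr (_ + _).
rewrite (eq_bigr (fun l => if p == l then coef [seq (q.1, u ++ q.2 :: ev c (map inl h) ++ v) | q <- bracket C y (c l)] w else 0)); last first.
  by move=> l _; case: eqP => _ //; rewrite coef_nil.
by rewrite sum_pick // ?ev_inl //; apply: hL; rewrite inE eqxx.
Qed.


Lemma enum_I3 : enum 'I_3 = [:: ord0; inord 1; inord 2].
Proof.
apply: (inj_map val_inj); rewrite val_enum_ord /= !inordK //.
Qed.

Lemma BR (y : 'I_3) (g : 'I_3 -> 'I_3 -> seq 'I_3) w :
  \sum_(A <- enum 'I_3) (coef [seq (q.1, g q.2 A) | q <- bracket C y A] w
                        + coef [seq (q.1, g A q.2) | q <- bracket C y A] w) = 0.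
Proof.
rewrite enum_I3 !big_cons big_nil.
have e0 : (ord0 : 'I_3) = inord 0 by apply: val_inj; rewrite /= inordK.
rewrite e0.
case: y => [[|[|[|y]]] Hy] //;
  rewrite /bracket /= ?inordK //= !coef_cons !coef_nil /=;
  set b1 := (_ == w); set b2 := (_ == w); case: b1; case: b2; ring.
Qed.


Lemma split_first (T : eqType) (x : T) (s : seq T) : x \in s ->
  exists s1 s2, s = s1 ++ x :: s2 /\ x \notin s1.
Proof.
elim: s => [|y s IH] //; rewrite inE; case: (eqVneq x y) => [<-|nxy] /= H.
  by exists [::], s.
have [s1 [s2 [-> ns1]]] := IH H.
exists (y :: s1), s2; split => //; by rewrite inE negb_or nxy.
Qed.

Lemma split_two (T : eqType) (x : T) (s : seq T) : count_mem x s = 2%N ->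
  exists s1 s2 s3, s = s1 ++ x :: s2 ++ x :: s3 /\ x \notin s1 /\ x \notin s2 /\ x \notin s3.
Proof.
move=> H; have xs : x \in s by rewrite -has_pred1 has_count H.
have [s1 [s' [E n1]]] := split_first xs.
move: H; rewrite E count_cat /= eqxx (count_memPn n1) add0n add1n => [[H']].
have xs' : x \in s' by rewrite -has_pred1 has_count H'.
have [s2 [s3 [E' n2]]] := split_first xs'.
move: H'; rewrite E' count_cat /= eqxx (count_memPn n2) add0n add1n => [[H3]].
exists s1, s2, s3; split => //; split => //; split => //.
by apply/count_memPn.
Qed.

Lemma ev_upd_notin c l A m : inl l \notin m -> ev (upd c l A) m = ev c m.
Proof.
elim: m => [|e m IH] //=; rewrite inE negb_or => /andP [ne nm]; rewrite IH //.
case: e ne => [p|x] //= ne; rewrite /upd.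
by case: eqP => // epl; move: ne; rewrite epl eqxx.
Qed.

Lemma cancel_one l c y m w : count_mem (inl l) m = 2%N ->
  \sum_(A <- enum 'I_3) coef (derl l [::] [::] (upd c l A) y m) w = 0.
Proof.
move/split_two=> [m1 [m2 [m3 [-> [n1 [n2 n3]]]]]].
rewrite -[RHS](BR y (fun a b => ev c m1 ++ a :: ev c m2 ++ b :: ev c m3) w).
apply: eq_bigr => A _.
rewrite derl_cat derl_notin //= eqxx derl_cat derl_notin //= eqxx derl_notin //.
rewrite ?cats0 ?cat0s coef_cat; congr (_ + _).
  rewrite /ev map_cat /= -/(ev _ m1) -/(ev _ m2) -/(ev _ m3) !ev_upd_notin // /upd eqxx.
  by congr coef; apply: eq_map => q.
rewrite !ev_upd_notin // /upd eqxx.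
by congr coef; apply: eq_map => q; rewrite cat_rcons -catA.
Qed.


Lemma cancel_all col LH y m w : uniq LH ->
  (forall l, l \in LH -> count_mem (inl l) m = 2%N) ->
  csum col LH (fun c => \sum_(l <- LH) coef (derl l [::] [::] c y m) w) = 0.
Proof.
move=> uL Hc; rewrite csum_sum big1_seq // => l /andP [_ lL].
rewrite (csum_perm col _ (perm_to_rem lL)) /= csum_pull; last by rewrite mem_rem_uniqF.
rewrite (@csum_ext _ _ _ (fun _ => 0)) ?csum0 // => c.
exact: cancel_one (Hc l lL).
Qed.

Definition mixw (u1 : seq 'I_3) (h1 : seq nat) u2 (h2 : seq nat) u3 : seq (nat + 'I_3) :=
  map inr u1 ++ map inl h1 ++ map inr u2 ++ map inl h2 ++ map inr u3.

Lemma count_mixw l u1 h1 u2 h2 u3 :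
  count_mem (inl l) (mixw u1 h1 u2 h2 u3) = count_mem l (h1 ++ h2).
Proof.
have cr : forall u : seq 'I_3, count_mem (inl l : (nat + 'I_3)%type) (map inr u) = 0%N.
  by elim=> //= x u ->.
have cl : forall h : seq nat, count_mem (inl l : (nat + 'I_3)%type) (map inl h) = count_mem l h.
  by elim=> //= x h ->.
by rewrite /mixw !count_cat !cr !cl !add0n addn0.
Qed.

Lemma dsub2_derl LH u1 h1 u2 h2 u3 c y w : uniq LH -> (forall p, p \in h1 ++ h2 -> p \in LH) ->
  coef (dsub u1 (map c h1) (u2 ++ map c h2 ++ u3) y) w
  + coef (dsub (u1 ++ map c h1 ++ u2) (map c h2) u3 y) w
  = \sum_(l <- LH) coef (derl l [::] [::] c y (mixw u1 h1 u2 h2 u3)) w.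
Proof.
move=> uL hL.
rewrite !(@dsub_derl LH) //; last 2 first.
- by move=> p ph; apply: hL; rewrite mem_cat ph orbT.
- by move=> p ph; apply: hL; rewrite mem_cat ph.
rewrite -big_split; apply: eq_bigr => l _.
rewrite /mixw !derl_cat !derl_inr !ev_cat !ev_inr !ev_inl /= !coef_cat !coef_nil.
by rewrite !cats0 addr0 -[(u1 ++ _) ++ u2]catA.
Qed.


Lemma Inv col LH (h1 h2 : seq nat) u1 u2 u3 y : uniq LH ->
  (forall p, p \in h1 ++ h2 -> p \in LH) ->
  (forall l, l \in LH -> count_mem l (h1 ++ h2) = 2%N) ->
  ueq (sumcol col LH (fun c => [:: ((1 : C), u1 ++ y :: map c h1 ++ u2 ++ map c h2 ++ u3)])
       ++ sumcol col LH (fun c => [:: ((1 : C), u1 ++ map c h1 ++ u2 ++ y :: map c h2 ++ u3)]))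
      (sumcol col LH (fun c => [:: ((1 : C), u1 ++ map c h1 ++ y :: u2 ++ map c h2 ++ u3)])
       ++ sumcol col LH (fun c => [:: ((1 : C), u1 ++ map c h1 ++ u2 ++ map c h2 ++ y :: u3)])).
Proof.
move=> uL hL cL.
apply: (U_ceqL (sumcol_catF _ _ _ _) (sumcol_catF _ _ _ _)).
apply: U_trans (U_sumcol col LH (G := fun c =>
   (((1 : C), u1 ++ map c h1 ++ y :: u2 ++ map c h2 ++ u3) :: dsub u1 (map c h1) (u2 ++ map c h2 ++ u3) y)
   ++ (((1 : C), u1 ++ map c h1 ++ u2 ++ map c h2 ++ y :: u3) :: dsub (u1 ++ map c h1 ++ u2) (map c h2) u3 y)) _) _.
  move=> c; apply: U_cat; first exact: expand.
  have := expand (u1 ++ map c h1 ++ u2) y (map c h2) u3.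
  by rewrite -!catA.
apply: U_ceq => w; rewrite !coef_sumcol.
rewrite (@csum_ext _ _ _ (fun c => coef ([:: ((1 : C), u1 ++ map c h1 ++ y :: u2 ++ map c h2 ++ u3)]
       ++ [:: ((1 : C), u1 ++ map c h1 ++ u2 ++ map c h2 ++ y :: u3)]) w
       + \sum_(l <- LH) coef (derl l [::] [::] c y (mixw u1 h1 u2 h2 u3)) w)).
  by rewrite csum_add cancel_all ?addr0 // => l lL; rewrite count_mixw cL.
move=> c; rewrite -dsub2_derl // !coef_cat !coef_cons !coef_nil; ring.
Qed.


Lemma combine (X Z P1 P2 P3 P4 M1 M2 M3 M4 : fsum C) :
  ueq (X ++ P1) (M1 ++ M4) -> ueq (P3 ++ X) (M2 ++ M3) -> ueq (M2 ++ M1) (P2 ++ Z) ->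
  ueq (M3 ++ M4) (Z ++ P4) -> ueq P1 P4 -> ueq P3 P2 -> ueq X Z.
Proof.
rewrite /ueq => H1 H2 H3 H4 H5 H6.
have H := J_scale (2^-1) (J_cat H1 (J_cat H2 (J_cat H3 (J_cat H4 (J_cat (J_scale (-1) H5) (J_scale (-1) H6)))))).
apply: J_ceq H => w.
rewrite !(coef_fscale, coef_cat, coef_dif).
have h2 : (2 : C) != 0 by rewrite pnatr_eq0.
by field.
Qed.

Lemma sumcol_eqF col L F G : (forall c, F c = G c) -> sumcol col L F = sumcol col L G.
Proof. by move=> E; apply: sumcol_ext => c _; apply: E. Qed.

Lemma Cent col a (u s v : seq 'I_3) :
  ueq (sumcol col [:: a] (fun c => [:: ((1 : C), u ++ c a :: c a :: s ++ v)]))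
      (sumcol col [:: a] (fun c => [:: ((1 : C), u ++ s ++ c a :: c a :: v)])).
Proof.
have step : forall u x s v, ueq (sumcol col [:: a] (fun c => [:: ((1 : C), u ++ x :: c a :: c a :: s ++ v)]))
      (sumcol col [:: a] (fun c => [:: ((1 : C), u ++ c a :: c a :: x :: s ++ v)])).
  move=> u' x s' v'.
  have := @Inv col [:: a] [:: a; a] [::] u' s' v' x.
  move=> H; apply: U_cancel (H _ _ _) (U_refl _).
  - by [].
  - by move=> p; rewrite /= !inE orbb.
  - by move=> l; rewrite inE => /eqP ->; rewrite /= eqxx.
elim: s u => [|x s IH] u.
  by apply: U_refl.
apply: U_trans (U_sym (step u x s v)) _.
have := IH (rcons u x).
rewrite (@sumcol_eqF _ _ (fun c => [:: ((1 : C), rcons u x ++ c a :: c a :: s ++ v)])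
   (fun c => [:: ((1 : C), u ++ x :: c a :: c a :: s ++ v)])); last by move=> c; rewrite cat_rcons.
rewrite (@sumcol_eqF _ _ (fun c => [:: ((1 : C), rcons u x ++ s ++ c a :: c a :: v)])
   (fun c => [:: ((1 : C), u ++ (x :: s) ++ c a :: c a :: v)])) //.
by move=> c; rewrite cat_rcons.
Qed.


Definition S1 col L (W : (nat -> 'I_3) -> seq 'I_3) := sumcol col L (fun c => [:: ((1 : C), W c)]).

Lemma Inv' col LH (h1 h2 : seq nat) u1 u2 u3 y W1 W2 W3 W4 : uniq LH ->
  (forall p, p \in h1 ++ h2 -> p \in LH) ->
  (forall l, l \in LH -> count_mem l (h1 ++ h2) = 2%N) ->
  (forall c, (forall p, p \notin LH -> c p = col p) ->
     [/\ W1 c = u1 ++ y :: map c h1 ++ u2 ++ map c h2 ++ u3,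
         W2 c = u1 ++ map c h1 ++ u2 ++ y :: map c h2 ++ u3,
         W3 c = u1 ++ map c h1 ++ y :: u2 ++ map c h2 ++ u3 &
         W4 c = u1 ++ map c h1 ++ u2 ++ map c h2 ++ y :: u3]) ->
  ueq (S1 col LH W1 ++ S1 col LH W2) (S1 col LH W3 ++ S1 col LH W4).
Proof.
move=> uL hL cL E; rewrite /S1.
rewrite (sumcol_ext (G := fun c => [:: ((1 : C), u1 ++ y :: map c h1 ++ u2 ++ map c h2 ++ u3)]));
  last by move=> c /E [-> _ _ _].
rewrite (sumcol_ext (F := fun c => [:: ((1 : C), W2 c)]) (G := fun c => [:: ((1 : C), u1 ++ map c h1 ++ u2 ++ y :: map c h2 ++ u3)]));
  last by move=> c /E [_ -> _ _].
rewrite (sumcol_ext (F := fun c => [:: ((1 : C), W3 c)]) (G := fun c => [:: ((1 : C), u1 ++ map c h1 ++ y :: u2 ++ map c h2 ++ u3)]));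
  last by move=> c /E [_ _ -> _].
rewrite (sumcol_ext (F := fun c => [:: ((1 : C), W4 c)]) (G := fun c => [:: ((1 : C), u1 ++ map c h1 ++ u2 ++ map c h2 ++ y :: u3)]));
  last by move=> c /E [_ _ _ ->].
exact: Inv.
Qed.

Lemma lift col a LH W1 W2 W3 W4 :
  (forall A, ueq (S1 (upd col a A) LH W1 ++ S1 (upd col a A) LH W2)
                 (S1 (upd col a A) LH W3 ++ S1 (upd col a A) LH W4)) ->
  ueq (S1 col (a :: LH) W1 ++ S1 col (a :: LH) W2) (S1 col (a :: LH) W3 ++ S1 col (a :: LH) W4).
Proof.
move=> H; rewrite /S1.
apply: (U_ceqL (sumcol_catF _ _ _ _) (sumcol_catF _ _ _ _)) => /=.
apply: U_flatten => A _.
apply: U_ceqL (fun w => esym (sumcol_catF _ _ _ _ w)) (fun w => esym (sumcol_catF _ _ _ _ w)) (H A).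
Qed.

Lemma liftC col a LH W W' (u s v : (nat -> 'I_3) -> seq 'I_3) : a \notin LH ->
  (forall c c', (forall p, p != a -> c' p = c p) ->
     W c' = u c ++ c' a :: c' a :: s c ++ v c /\ W' c' = u c ++ s c ++ c' a :: c' a :: v c) ->
  ueq (S1 col (a :: LH) W) (S1 col (a :: LH) W').
Proof.
move=> aL E; rewrite /S1.
have p : perm_eq (a :: LH) (LH ++ [:: a]) by rewrite -cat1s perm_catC.
apply: U_ceqL (fun w => esym (sumcol_perm _ _ p w)) (fun w => esym (sumcol_perm _ _ p w)) _.
rewrite !sumcol_catL; apply: U_sumcol => c.
rewrite (sumcol_ext (G := fun c' => [:: ((1 : C), u c ++ c' a :: c' a :: s c ++ v c)])); last first.
  move=> c' H; have H' : forall p, p != a -> c' p = c p by move=> q nq; apply: H; rewrite inE.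
  by have [-> _] := E c c' H'.
rewrite (sumcol_ext (F := fun c' => [:: ((1 : C), W' c')]) (G := fun c' => [:: ((1 : C), u c ++ s c ++ c' a :: c' a :: v c)])); last first.
  move=> c' H; have H' : forall p, p != a -> c' p = c p by move=> q nq; apply: H; rewrite inE.
  by have [_ ->] := E c c' H'.
exact: Cent.
Qed.


Lemma map_agree (c c' : nat -> 'I_3) a (h : seq nat) :
  (forall p, p != a -> c' p = c p) -> a \notin h -> map c' h = map c h.
Proof.
move=> E ah; apply/eq_in_map => p ph; apply: E.
by apply: contraNneq ah => <-.
Qed.

Lemma XC col a LH (h1 h2 : seq nat) (I1 I2 : seq 'I_3) :
  a \notin LH -> uniq LH ->
  (forall p, p \in h1 ++ h2 -> p \in LH) ->
  (forall l, l \in LH -> count_mem l (h1 ++ h2) = 2%N) ->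
  ueq (S1 col (a :: LH) (fun c => I1 ++ c a :: map c h1 ++ I2 ++ c a :: map c h2))
      (S1 col (a :: LH) (fun c => I1 ++ map c h1 ++ c a :: I2 ++ map c h2 ++ [:: c a])).
Proof.
move=> aL uL hL cL.
have ah1 : a \notin h1 by apply: contra aL => ah; apply: hL; rewrite mem_cat ah.
have ah2 : a \notin h2 by apply: contra aL => ah; apply: hL; rewrite mem_cat ah orbT.
have ca : forall A c, (forall p, p \notin LH -> c p = upd col a A p) -> c a = A.
  by move=> A c H; rewrite H // /upd eqxx.
apply: (@combine _ _
  (S1 col (a :: LH) (fun c => I1 ++ map c h1 ++ I2 ++ c a :: c a :: map c h2))
  (S1 col (a :: LH) (fun c => I1 ++ map c h1 ++ c a :: c a :: I2 ++ map c h2))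
  (S1 col (a :: LH) (fun c => I1 ++ c a :: c a :: map c h1 ++ I2 ++ map c h2))
  (S1 col (a :: LH) (fun c => I1 ++ map c h1 ++ I2 ++ map c h2 ++ [:: c a; c a]))
  (S1 col (a :: LH) (fun c => I1 ++ map c h1 ++ c a :: I2 ++ c a :: map c h2))
  (S1 col (a :: LH) (fun c => I1 ++ c a :: map c h1 ++ c a :: I2 ++ map c h2))
  (S1 col (a :: LH) (fun c => I1 ++ c a :: map c h1 ++ I2 ++ map c h2 ++ [:: c a]))
  (S1 col (a :: LH) (fun c => I1 ++ map c h1 ++ I2 ++ c a :: map c h2 ++ [:: c a]))).
- apply: lift => A; apply: (@Inv' _ _ h1 h2 I1 (I2 ++ [:: A]) [::] A) => // c /ca ->.
  by split; rewrite ?cats0 -?catA.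
- apply: lift => A; apply: (@Inv' _ _ h1 h2 (I1 ++ [:: A]) I2 [::] A) => // c /ca ->.
  by split; rewrite ?cats0 -?catA.
- apply: lift => A; apply: (@Inv' _ _ h1 h2 I1 (A :: I2) [::] A) => // c /ca ->.
  by split; rewrite ?cats0 -?catA.
- apply: lift => A; apply: (@Inv' _ _ h1 h2 I1 I2 [:: A] A) => // c /ca ->.
  by split; rewrite ?cats0 -?catA.
- apply: (@liftC _ _ _ _ _ (fun c => I1 ++ map c h1 ++ I2) (fun c => map c h2) (fun _ => [::])) => // c c' E.
  by rewrite (map_agree E ah1) (map_agree E ah2); split; rewrite -?catA ?cats0.
- apply: (@liftC _ _ _ _ _ (fun _ => I1) (fun c => map c h1) (fun c => I2 ++ map c h2)) => // c c' E.
  by rewrite (map_agree E ah1) (map_agree E ah2); split; rewrite -?catA ?cats0.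
Qed.


Lemma map_agree_out (c c' : nat -> 'I_3) (L h : seq nat) :
  (forall p, p \notin L -> c' p = c p) -> (forall p, p \in h -> p \notin L) -> map c' h = map c h.
Proof. by move=> E hL; apply/eq_in_map => p ph; apply: E; apply: hL. Qed.

Lemma XT (i1 i2 h1 h2 : seq nat) a :
  a \notin i1 ++ i2 -> a \notin h1 ++ h2 ->
  (forall p, p \in h1 ++ h2 -> p \notin i1 ++ i2) ->
  (forall l, l \in h1 ++ h2 -> count_mem l (h1 ++ h2) = 2%N) ->
  ueq (wsl2 C (i1 ++ a :: h1 ++ i2 ++ a :: h2)) (wsl2 C (i1 ++ h1 ++ a :: i2 ++ h2 ++ [:: a])).
Proof.
move=> ai ah hi cnt.
set LO := undup (i1 ++ i2); set LH := undup (h1 ++ h2).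
have uL : uniq (LO ++ a :: LH).
  rewrite cat_uniq /= !undup_uniq mem_undup (negbTE ai) /= /LH mem_undup ah andbT.
  by rewrite andbT; apply/hasPn => p; rewrite /LO !mem_undup => /hi.
have memL : forall p, (p \in LO ++ a :: LH) = [|| p \in i1, p \in i2, p == a, p \in h1 | p \in h2].
  move=> p; rewrite /LO /LH mem_cat inE !mem_undup !mem_cat.
  by case: (p \in i1); case: (p \in i2); case: (p == a); case: (p \in h1); case: (p \in h2).
have pW1 : perm_eq (undup (i1 ++ a :: h1 ++ i2 ++ a :: h2)) (LO ++ a :: LH).
  apply: uniq_perm => //; first exact: undup_uniq.
  move=> p; rewrite memL mem_undup !mem_cat !inE !mem_cat.
  rewrite !(mem_cat, inE).
  by case: (p \in i1); case: (p \in i2); case: (p == a); case: (p \in h1); case: (p \in h2).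
have pW2 : perm_eq (undup (i1 ++ h1 ++ a :: i2 ++ h2 ++ [:: a])) (LO ++ a :: LH).
  apply: uniq_perm => //; first exact: undup_uniq.
  move=> p; rewrite memL mem_undup !(mem_cat, inE).
  by case: (p \in i1); case: (p \in i2); case: (p == a); case: (p \in h1); case: (p \in h2).
apply: U_ceqL (fun w => esym (wsl2_sumcol _ w)) (fun w => esym (wsl2_sumcol _ w)) _.
apply: U_ceqL (fun w => esym (sumcol_perm _ _ pW1 w)) (fun w => esym (sumcol_perm _ _ pW2 w)) _.
rewrite !sumcol_catL; apply: U_sumcol => c.
have iout : forall p, p \in i1 ++ i2 -> p \notin a :: LH.
  move=> p pi; rewrite inE mem_undup negb_or; apply/andP; split.
    by apply: contraNneq ai => <-.
  by apply: contra (hi p) _ => //; rewrite pi.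
have iout1 : forall p, p \in i1 -> p \notin a :: LH by move=> p pi; apply: iout; rewrite mem_cat pi.
have iout2 : forall p, p \in i2 -> p \notin a :: LH by move=> p pi; apply: iout; rewrite mem_cat pi orbT.
have := @XC c a LH h1 h2 (map c i1) (map c i2).
rewrite /S1 => H.
rewrite (sumcol_ext (G := fun c' => [:: ((1 : C), map c i1 ++ c' a :: map c' h1 ++ map c i2 ++ c' a :: map c' h2)])); last first.
  move=> c' E; by rewrite !map_cat /= !map_cat /= (map_agree_out E iout1) (map_agree_out E iout2).
rewrite (sumcol_ext (F := fun c' => [:: ((1 : C), map c' (i1 ++ h1 ++ a :: i2 ++ h2 ++ [:: a]))]) (G := fun c' => [:: ((1 : C), map c i1 ++ map c' h1 ++ c' a :: map c i2 ++ map c' h2 ++ [:: c' a])])); last first.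
  move=> c' E; by rewrite !map_cat /= !map_cat /= (map_agree_out E iout1) (map_agree_out E iout2).
apply: H.
- by rewrite mem_undup.
- exact: undup_uniq.
- by move=> p; rewrite mem_undup.
- by move=> l; rewrite mem_undup; apply: cnt.
Qed.


Definition swp (a b : nat) (x : nat) : nat := if x == a then b else if x == b then a else x.

Lemma swp_inj a b : injective (swp a b).
Proof.
apply: (can_inj (g := swp a b)) => x; rewrite /swp.
case: (eqVneq x a) => [->|xa]; first by rewrite eqxx; case: eqP.
case: (eqVneq x b) => [->|xb]; first by rewrite eqxx.
by rewrite (negbTE xa) (negbTE xb).
Qed.

Lemma map_swp_fix a b (s : seq nat) : (forall x, x \in s -> (x != a) && (x != b)) -> map (swp a b) s = s.
Proof.
move=> H; rewrite -[RHS]map_id; apply/eq_in_map => x /H /andP [xa xb].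
by rewrite /swp (negbTE xa) (negbTE xb).
Qed.

Lemma foldr_max_ge (s : seq nat) k : k \in s -> (k <= foldr maxn 0 s)%N.
Proof.
elim: s => [|x s IH] //; rewrite inE => /orP [/eqP ->|ks] /=; first by rewrite leq_maxl.
by rewrite (leq_trans (IH ks)) // leq_maxr.
Qed.

Lemma fresh_gt (I : share) k : k \in I.1 ++ I.2 -> (k < fresh I)%N.
Proof. by move=> /foldr_max_ge; rewrite /fresh ltnS. Qed.

Lemma in_tagI (s : word) x : x \in tagI s -> exists2 k, k \in s & x = k.*2.
Proof. by move/mapP. Qed.

Lemma in_tagH (s : word) x : x \in tagH s -> exists2 k, k \in s & x = k.*2.+1.
Proof. by move/mapP. Qed.

Lemma tag_neq k k' : k.*2 != k'.*2.+1.
Proof. by apply/eqP => /(congr1 odd); rewrite /= !odd_double. Qed.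


Lemma tagI_cat s t : tagI (s ++ t) = tagI s ++ tagI t. Proof. exact: map_cat. Qed.
Lemma tagH_cat s t : tagH (s ++ t) = tagH s ++ tagH t. Proof. exact: map_cat. Qed.
Lemma tagI_cons x s : tagI (x :: s) = x.*2 :: tagI s. Proof. by []. Qed.
Lemma tagH_cons x s : tagH (x :: s) = x.*2.+1 :: tagH s. Proof. by []. Qed.

Lemma eqn_double (m n : nat) : (m.*2 == n.*2) = (m == n).
Proof. exact: (inj_eq (can_inj doubleK)). Qed.

Lemma swp_fixI (f g : nat) (s : word) : (forall k, k \in s -> (k < f)%N) ->
  map (swp g.*2.+1 f.*2) (tagI s) = tagI s.
Proof.
move=> H; apply: map_swp_fix => x /in_tagI [k ks ->].
rewrite tag_neq /= eqn_double; apply/eqP => ekf; move: (H k ks); by rewrite ekf ltnn.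
Qed.

Lemma swp_fixH (f g : nat) (s : word) : (forall k, k \in s -> (k < g)%N) ->
  map (swp g.*2.+1 f.*2) (tagH s) = tagH s.
Proof.
move=> H; apply: map_swp_fix => x /in_tagH [k ks ->].
rewrite (eq_sym _ f.*2) tag_neq andbT eqSS eqn_double; apply/eqP => ekf; move: (H k ks); by rewrite ekf ltnn.
Qed.

Lemma swp_b (f g : nat) : swp g.*2.+1 f.*2 g.*2.+1 = f.*2.
Proof. by rewrite /swp eqxx. Qed.

Lemma Y_eq (I H : share) : wsl2 C (join (Ysh I) H) = wsl2 C (join I (Ush H)).
Proof.
rewrite -(wsl2_relabel (join I (Ush H)) (@swp_inj (fresh H).*2.+1 (fresh I).*2)).
congr (wsl2 C _); rewrite /join /Ysh /Ush /=.
rewrite !tagI_cat !tagH_cat !map_cat /= !map_cat /= swp_b.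
have fI1 : map (swp (fresh H).*2.+1 (fresh I).*2) (tagI I.1) = tagI I.1.
  by apply: swp_fixI => k kI; apply: fresh_gt; rewrite mem_cat kI.
have fI2 : map (swp (fresh H).*2.+1 (fresh I).*2) (tagI I.2) = tagI I.2.
  by apply: swp_fixI => k kI; apply: fresh_gt; rewrite mem_cat kI orbT.
have fH1 : map (swp (fresh H).*2.+1 (fresh I).*2) (tagH H.1) = tagH H.1.
  by apply: swp_fixH => k kI; apply: fresh_gt; rewrite mem_cat kI.
have fH2 : map (swp (fresh H).*2.+1 (fresh I).*2) (tagH H.2) = tagH H.2.
  by apply: swp_fixH => k kI; apply: fresh_gt; rewrite mem_cat kI orbT.
rewrite fI1 fI2 fH1 fH2 -!catA /=.
by [].
Qed.


Lemma count_tagH (s : word) k : count_mem k.*2.+1 (tagH s) = count_mem k s.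
Proof.
rewrite /tagH count_map; apply: eq_count => x /=.
by rewrite /= eqSS eqn_double.
Qed.

Lemma X_U (I H : share) : valid_share H ->
  ueq (wsl2 C (join (Xsh I) H)) (wsl2 C (join I (Xsh H))).
Proof.
move=> vH.
rewrite -(wsl2_relabel (join I (Xsh H)) (@swp_inj (fresh H).*2.+1 (fresh I).*2)).
have -> : map (swp (fresh H).*2.+1 (fresh I).*2) (join I (Xsh H))
    = tagI I.1 ++ tagH H.1 ++ (fresh I).*2 :: tagI I.2 ++ tagH H.2 ++ [:: (fresh I).*2].
  rewrite /join /Xsh /= !tagH_cat !map_cat /= ?map_cat /= swp_b.
  have fI1 : map (swp (fresh H).*2.+1 (fresh I).*2) (tagI I.1) = tagI I.1.
    by apply: swp_fixI => k kI; apply: fresh_gt; rewrite mem_cat kI.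
  have fI2 : map (swp (fresh H).*2.+1 (fresh I).*2) (tagI I.2) = tagI I.2.
    by apply: swp_fixI => k kI; apply: fresh_gt; rewrite mem_cat kI orbT.
  have fH1 : map (swp (fresh H).*2.+1 (fresh I).*2) (tagH H.1) = tagH H.1.
    by apply: swp_fixH => k kI; apply: fresh_gt; rewrite mem_cat kI.
  have fH2 : map (swp (fresh H).*2.+1 (fresh I).*2) (tagH H.2) = tagH H.2.
    by apply: swp_fixH => k kI; apply: fresh_gt; rewrite mem_cat kI orbT.
  by rewrite fI1 fI2 fH1 fH2 -!catA /=.
have -> : join (Xsh I) H = tagI I.1 ++ (fresh I).*2 :: tagH H.1 ++ tagI I.2 ++ (fresh I).*2 :: tagH H.2.
  by rewrite /join /Xsh /= !tagI_cat -!catA /=.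
apply: XT.
- rewrite -tagI_cat; apply/negP => /in_tagI [k kI /eqP]; rewrite eqn_double => /eqP ek.
  by move: (fresh_gt kI); rewrite ek ltnn.
- by rewrite -tagH_cat; apply/negP => /in_tagH [k _ /eqP]; rewrite (negbTE (tag_neq _ _)).
- rewrite -tagH_cat => p /in_tagH [k _ ->]; rewrite -tagI_cat.
  by apply/negP => /in_tagI [k' _ /eqP]; rewrite eq_sym (negbTE (tag_neq _ _)).
- rewrite -tagH_cat => l /in_tagH [k kH ->]; rewrite count_tagH.
  by move/allP: vH => /(_ k kH) /eqP.
Qed.


End Work.

Unset Implicit Arguments.

Theorem lemma9 (C : numClosedFieldType) (v1 v2 : span_el C) :
  valid_span v1 -> valid_span v2 ->
  ueq (pairing (opY v1) v2) (pairing v1 (opU v2)) /\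
  ueq (pairing (opX v1) v2) (pairing v1 (opX v2)).
Proof.
move=> _ vv2; split.
  have -> : pairing (opY v1) v2 = pairing v1 (opU v2).
    rewrite /pairing /opY /opU; congr flatten.
    elim: v1 => //= x v1 ->; congr (_ ++ _).
    rewrite -map_comp; apply: eq_map => b /=; by rewrite Y_eq.
  exact: U_refl.
rewrite /pairing /opX.
elim: v1 => [|x v1 IH] /=; first exact: U_refl.
rewrite !flatten_cat; apply: U_cat => //.
rewrite -map_comp; apply: U_flatten => b bv2 /=.
apply: U_scale; apply: X_U.
by move/allP: vv2; apply; apply: map_f.
Qed.
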